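(* The ai-semiring $\mathcal{B}_2^1$ lies in the variety of ai-semirings generated by $\mathcal{A}_2^1$, i.e., $\mathcal{B}_2^1$ satisfies every identity (in the signature $+,\cdot$) satisfied by $\mathcal{A}_2^1$.
   Context: An ai-semiring is a structure $(R,+,\cdot)$ with $(R,+)$ a semilattice, $(R,\cdot)$ a semigroup, and multiplication distributing over addition on both sides; in a semilattice, $s\le t$ iff $s+t=t$, and $s+t$ is the supremum. $\mathcal{A}_2^1$: Let $A_2=\langle e,a\mid eae=e^2=e,\ aea=a,\ a^2=0\rangle=\{e,a,ae,ea,0\}$, $A_2^1$ the monoid obtained by adjoining an identity $1$. Represent $A_2^1$ by order-preserving maps of the chain $0<1<2$ fixing $2$ (acting on the right, $x(\alpha\beta)=(x\alpha)\beta$): $1\mapsto$ identity; $ea\mapsto(0\mapsto1,1\mapsto1,2\mapsto2)$; $ae\mapsto(0\mapsto0,1\mapsto2,2\mapsto2)$; $a\mapsto(0\mapsto1,1\mapsto2,2\mapsto2)$; $e\mapsto(0\mapsto0,1\mapsto0,2\mapsto2)$; $0\mapsto$ constant map to $2$. Addition in $\mathcal{A}_2^1$ is pointwise maximum; its order is $e<1<ea<a<0$, $1<ae<a$ with $ea,ae$ incomparable. $\mathcal{B}_2^1$: $B_2=\langle c,d\mid cdc=c,\ dcd=d,\ c^2=d^2=0\rangle=\{c,d,cd,dc,0\}$, $B_2^1$ with identity $1$ adjoined; addition is the join in the order where $0$ is the top, $c,d,cd,dc$ lie directly below $0$, and $1$ lies below $cd$ and $dc$ only. *)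

(* Defs.v *)
From mathcomp Require Import all_boot.
Set Implicit Arguments. Unset Strict Implicit. Unset Printing Implicit Defensive.

Inductive term : Type :=
| Var of nat
| Add of term & term
| Mul of term & term.

Fixpoint eval {T : Type} (add mul : T -> T -> T) (v : nat -> T) (t : term) : T :=
  match t with
  | Var n => v n
  | Add s u => add (eval add mul v s) (eval add mul v u)
  | Mul s u => mul (eval add mul v s) (eval add mul v u)
  end.

Definition satisfies {T : Type} (add mul : T -> T -> T) (s t : term) : Prop :=
  forall v : nat -> T, eval add mul v s = eval add mul v t.

Inductive A21 : Type := A1 | Ae | Aa | Aae | Aea | A0.

(** Each element is an order-preserving map of the chain 0<1<2 fixing 2;
    actA x i is the image of i. *)
Definition actA (x : A21) (i : nat) : nat :=
  if i >= 2 then 2 else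
  match x with
  | A1  => i
  | Aea => 1
  | Aae => if i == 0 then 0 else 2
  | Aa  => i.+1
  | Ae  => 0
  | A0  => 2
  end.

Definition ofPairA (p : nat * nat) : A21 :=
  match p with
  | (0, 1) => A1 | (1, 1) => Aea | (0, 2) => Aae
  | (1, 2) => Aa | (0, 0) => Ae | _ => A0
  end.

(** Right action: x (alpha beta) = (x alpha) beta. *)
Definition mulA (x y : A21) : A21 :=
  ofPairA (actA y (actA x 0), actA y (actA x 1)).

Definition addA (x y : A21) : A21 :=
  ofPairA (maxn (actA x 0) (actA y 0), maxn (actA x 1) (actA y 1)).

Inductive B21 : Type := B1 | Bc | Bd | Bcd | Bdc | B0.

(** Multiplication of B_2 = <c,d | cdc=c, dcd=d, c^2=d^2=0>, with 1 adjoined. *)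
Definition mulB (x y : B21) : B21 :=
  match x, y with
  | B1, _ => y
  | _, B1 => x
  | B0, _ => B0
  | _, B0 => B0
  | Bc, Bd => Bcd
  | Bc, Bdc => Bc
  | Bd, Bc => Bdc
  | Bd, Bcd => Bd
  | Bcd, Bc => Bc
  | Bcd, Bcd => Bcd
  | Bdc, Bd => Bd
  | Bdc, Bdc => Bdc
  | _, _ => B0
  end.

Definition leB (x y : B21) : bool :=
  match x, y with
  | _, B0 => true
  | B1, (B1 | Bcd | Bdc) => true
  | Bc, Bc | Bd, Bd | Bcd, Bcd | Bdc, Bdc => true
  | _, _ => false
  end.

Definition addB (x y : B21) : B21 :=
  match x, y with
  | B1, B1 => B1
  | B1, Bcd | Bcd, B1 | Bcd, Bcd => Bcd
  | B1, Bdc | Bdc, B1 | Bdc, Bdc => Bdc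
  | Bc, Bc => Bc
  | Bd, Bd => Bd
  | _, _ => B0
  end.

Definition allA := [:: A1; Ae; Aa; Aae; Aea; A0].
Definition allB := [:: B1; Bc; Bd; Bcd; Bdc; B0].

Lemma mulA_act : forall x y i, i <= 2 -> actA (mulA x y) i = actA y (actA x i).
Proof. by do 2 case; case=> [|[|[|]]]. Qed.

Lemma addA_act : forall x y i, i <= 2 -> actA (addA x y) i = maxn (actA x i) (actA y i).
Proof. by do 2 case; case=> [|[|[|]]]. Qed.

Lemma addB_join : forall x y z,
  leB x (addB x y) /\ leB y (addB x y) /\ (leB x z -> leB y z -> leB (addB x y) z).
Proof. by do 3 case. Qed.

Lemma mulB_rel : mulB (mulB Bc Bd) Bc = Bc /\ mulB (mulB Bd Bc) Bd = Bd /\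
  mulB Bc Bc = B0 /\ mulB Bd Bd = B0 /\ mulB Bc Bd = Bcd /\ mulB Bd Bc = Bdc.
Proof. by []. Qed.

Lemma mulB_assoc : forall x y z, mulB x (mulB y z) = mulB (mulB x y) z.
Proof. by do 3 case. Qed.

(* Main.v *)
Require Import Defs.
From mathcomp Require Import all_boot.

Definition gS (p : A21 * A21) : option B21 :=
  match p.1, p.2 with
  | A1, A1 => Some B1
  | Ae, Aa => Some Bc
  | Aa, Ae => Some Bd
  | Aa, A1 => Some B0
  | A1, Aa => Some B0
  | Aea, Aae => Some Bcd
  | Aae, Aea => Some Bdc
  | Aa, Aa => Some B0
  | Ae, A0 => Some B0
  | A0, Ae => Some B0
  | A0, A1 => Some B0
  | A0, Aea => Some B0
  | Aa, Aea => Some B0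
  | Aa, Aae => Some B0
  | A0, Aae => Some B0
  | A0, Aa => Some B0
  | Aae, A0 => Some B0
  | Aea, A0 => Some B0
  | Aa, A0 => Some B0
  | Aae, Aa => Some B0
  | Aea, Aa => Some B0
  | A1, A0 => Some B0
  | A0, A0 => Some B0
  | _, _ => None
  end.

Definition mulP (x y : A21 * A21) := (mulA x.1 y.1, mulA x.2 y.2).
Definition addP (x y : A21 * A21) := (addA x.1 y.1, addA x.2 y.2).

Definition sec (b : B21) : A21 * A21 :=
  match b with
  | B1 => (A1, A1) | Bc => (Ae, Aa) | Bd => (Aa, Ae)
  | Bcd => (Aea, Aae) | Bdc => (Aae, Aea) | B0 => (A0, A0)
  end.

Lemma sec_ok b : gS (sec b) = Some b.
Proof. by case: b. Qed.

Lemma mul_ok x y : match gS x, gS y with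
  | Some b, Some b' => gS (mulP x y) = Some (mulB b b') | _, _ => True end.
Proof. by case: x => [[] []]; case: y => [[] []]. Qed.

Lemma add_ok x y : match gS x, gS y with
  | Some b, Some b' => gS (addP x y) = Some (addB b b') | _, _ => True end.
Proof. by case: x => [[] []]; case: y => [[] []]. Qed.

Lemma evalP_ok (v : nat -> B21) t :
  gS (eval addP mulP (fun n => sec (v n)) t) = Some (eval addB mulB v t).
Proof.
elim: t => [n|s IHs u IHu|s IHs u IHu] /=; first exact: sec_ok.
- by have := add_ok (eval addP mulP (fun n => sec (v n)) s)
       (eval addP mulP (fun n => sec (v n)) u); rewrite IHs IHu.
- by have := mul_ok (eval addP mulP (fun n => sec (v n)) s)
       (eval addP mulP (fun n => sec (v n)) u); rewrite IHs IHu.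
Qed.

Lemma evalP_split (w : nat -> A21 * A21) t :
  eval addP mulP w t = (eval addA mulA (fun n => (w n).1) t, eval addA mulA (fun n => (w n).2) t).
Proof.
by elim: t => [n|s IHs u IHu|s IHs u IHu] /=; [case: (w n)| rewrite IHs IHu | rewrite IHs IHu].
Qed.

Theorem corollary3p3 :
  forall s t : term, satisfies addA mulA s t -> satisfies addB mulB s t.
Proof.
move=> s t H v.
have := evalP_ok v s; have := evalP_ok v t.
rewrite !evalP_split !H => -> [] //.
Qed.
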